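(* In $NOM$, writing $\phi\perp\!\!\!\perp\psi$ for $(\phi\rightarrow(\psi\rightarrow\phi))\wedge(\psi\rightarrow(\phi\rightarrow\psi))$, for every finite sequence $\Gamma$ and formulas $\phi,\psi$ the following rules are derivable: from $\Gamma\vdash\phi\perp\!\!\!\perp\psi$ infer each of $\Gamma,\phi,\psi\vdash\phi$; $\Gamma,\psi,\phi\vdash\psi$; $\Gamma\vdash\psi\perp\!\!\!\perp\phi$; $\Gamma\vdash\phi\perp\!\!\!\perp\neg\psi$; $\Gamma\vdash\neg\phi\perp\!\!\!\perp\psi$; from $\Gamma\vdash\phi\perp\!\!\!\perp\neg\psi$ infer $\Gamma\vdash\phi\perp\!\!\!\perp\psi$; from $\Gamma\vdash\neg\phi\perp\!\!\!\perp\psi$ infer $\Gamma\vdash\phi\perp\!\!\!\perp\psi$. Moreover the sequents $\Gamma\vdash\phi\perp\!\!\!\perp(\phi\rightarrow\psi)$, $\Gamma\vdash\phi\perp\!\!\!\perp(\phi\wedge\psi)$ and $\Gamma\vdash\psi\perp\!\!\!\perp(\phi\wedge\psi)$ are derivable.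
   Context: The propositional deductive system $NOM$: formulas are built from propositional letters using $\wedge$, $\rightarrow$, $\neg$. Sequents are $\phi_1,\ldots,\phi_n\vdash\psi$ ($n\ge0$) with antecedent a finite ordered sequence. With $\Gamma$ a finite possibly empty sequence of formulas and $\phi,\psi,\chi$ formulas, the rules of $NOM$ are: (assumption) $\Gamma,\phi\vdash\phi$; (cut) $\Gamma\vdash\phi$, $\Gamma,\phi\vdash\psi$ $\Rightarrow$ $\Gamma\vdash\psi$; (paste) $\Gamma\vdash\phi$, $\Gamma\vdash\psi$ $\Rightarrow$ $\Gamma,\phi\vdash\psi$; (compatible exchange) $\Gamma,\phi,\psi\vdash\phi$, $\Gamma,\phi,\psi\vdash\chi$, $\Gamma,\psi,\phi\vdash\psi$ $\Rightarrow$ $\Gamma,\psi,\phi\vdash\chi$; ($\wedge$-intro) $\Gamma\vdash\phi$, $\Gamma\vdash\psi$ $\Rightarrow$ $\Gamma\vdash\phi\wedge\psi$; ($\wedge$-elim) $\Gamma\vdash\phi\wedge\psi$ $\Rightarrow$ $\Gamma\vdash\phi$ and $\Rightarrow$ $\Gamma\vdash\psi$; ($\rightarrow$-intro) $\Gamma,\phi\vdash\psi$ $\Rightarrow$ $\Gamma\vdash\phi\rightarrow\psi$; ($\rightarrow$-elim) $\Gamma\vdash\phi\rightarrow\psi$ $\Rightarrow$ $\Gamma,\phi\vdash\psi$; (excluded middle) $\Gamma,\phi\vdash\psi$, $\Gamma,\neg\phi\vdash\psi$ $\Rightarrow$ $\Gamma\vdash\psi$; (explosion) $\Gamma\vdash\neg\phi$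 $\Rightarrow$ $\Gamma,\phi\vdash\psi$. A rule schema is derivable if in every instance its conclusion can be derived from its premises using these rules. *)

(* Defs.v *)
From Stdlib Require Import List.
Import ListNotations.

Inductive form : Type :=
| Var : nat -> form
| And : form -> form -> form
| Imp : form -> form -> form
| Neg : form -> form.

(* A sequent  phi_1,...,phi_n |- psi ; the antecedent is an ordered list,
   and "Gamma, phi" is Gamma ++ [phi]. *)
Definition sequent : Type := (list form * form)%type.

Inductive Der (H : list sequent) : sequent -> Prop :=
| d_prem : forall s, In s H -> Der H s
| d_assum : forall G p, Der H (G ++ [p], p)
| d_cut : forall G p q, Der H (G, p) -> Der H (G ++ [p], q) -> Der H (G, q)
| d_paste : forall G p q, Der H (G, p) -> Der H (G, q) -> Der H (G ++ [p], q)
| d_cexch : forall G p q r,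
    Der H (G ++ [p; q], p) -> Der H (G ++ [p; q], r) -> Der H (G ++ [q; p], q) ->
    Der H (G ++ [q; p], r)
| d_andI : forall G p q, Der H (G, p) -> Der H (G, q) -> Der H (G, And p q)
| d_andE1 : forall G p q, Der H (G, And p q) -> Der H (G, p)
| d_andE2 : forall G p q, Der H (G, And p q) -> Der H (G, q)
| d_impI : forall G p q, Der H (G ++ [p], q) -> Der H (G, Imp p q)
| d_impE : forall G p q, Der H (G, Imp p q) -> Der H (G ++ [p], q)
| d_em : forall G p q, Der H (G ++ [p], q) -> Der H (G ++ [Neg p], q) -> Der H (G, q)
| d_expl : forall G p q, Der H (G, Neg p) -> Der H (G ++ [p], q).

Definition derivable_rule1 (prem concl : sequent) : Prop := Der [prem] concl.

Definition derivable (s : sequent) : Prop := Der [] s.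

Definition Comp (p q : form) : form :=
  And (Imp p (Imp q p)) (Imp q (Imp p q)).

(* Main.v *)
Require Import Defs.
From Stdlib Require Import List.
Import ListNotations.

Lemma cex (H : list sequent) G a b r :
  Der H ((G ++ [a]) ++ [b], a) -> Der H ((G ++ [a]) ++ [b], r) ->
  Der H ((G ++ [b]) ++ [a], b) -> Der H ((G ++ [b]) ++ [a], r).
Proof. rewrite <- !app_assoc; simpl; apply d_cexch. Qed.

Lemma absurd_ext (H : list sequent) G :
  (forall X, Der H (G, X)) -> forall w X, Der H (G ++ [w], X).
Proof. intros Hab w X. apply d_paste; apply Hab. Qed.

Lemma dn1 (H : list sequent) G a : Der H (G ++ [Neg (Neg a)], a).
Proof.
  apply (d_em H _ a a).
  - apply d_assum.
  - apply d_expl. apply d_assum.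
Qed.

Lemma contra (H : list sequent) G a X : Der H ((G ++ [a]) ++ [Neg a], X).
Proof.
  assert (T : Der H (G, Imp a (Imp (Neg a) X))).
  { apply (d_em H _ (Neg a)).
    - apply d_impI. apply d_impI. apply d_expl. apply d_expl. apply d_assum.
    - apply d_impI. apply d_impI. apply d_expl. apply d_paste.
      + apply dn1.
      + apply d_assum. }
  apply d_impE. apply d_impE. exact T.
Qed.

Lemma dn2 (H : list sequent) G a : Der H (G, a) -> Der H (G, Neg (Neg a)).
Proof.
  intro Ha. apply (d_cut H G a); [exact Ha|].
  apply (d_em H _ (Neg a)).
  - apply contra.
  - apply d_assum.
Qed.

Lemma expl_pos (H : list sequent) G a X : Der H (G, a) -> Der H (G ++ [Neg a], X).
Proof. intro Ha. apply d_expl. apply dn2. exact Ha. Qed.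

Lemma Klem (H : list sequent) G b x X :
  Der H (G, Neg b) -> Der H (G ++ [x], b) -> Der H (G ++ [x], X).
Proof.
  intros Hnb Hxb. apply (d_cut H _ b); [exact Hxb|].
  apply cex.
  - apply absurd_ext. intro Y. apply d_expl. exact Hnb.
  - apply absurd_ext. intro Y. apply d_expl. exact Hnb.
  - apply d_paste; [exact Hxb| apply d_assum].
Qed.

Lemma L2 (H : list sequent) Z a b : Der H (Z ++ [Neg b], Neg (And a b)).
Proof.
  apply (d_em H _ (And a b)).
  - apply (Klem H _ b). + apply d_assum. + apply (d_andE2 H _ a). apply d_assum.
  - apply d_assum.
Qed.

Lemma L2a (H : list sequent) Z a b : Der H (Z ++ [Neg a], Neg (And a b)).
Proof.
  apply (d_em H _ (And a b)).
  - apply (Klem H _ a). + apply d_assum. + apply (d_andE1 H _ _ b). apply d_assum.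
  - apply d_assum.
Qed.

Lemma ORlem (H : list sequent) Y a b :
  Der H (Y, a) -> Der H (Y ++ [b], a) -> Der H (Y ++ [Neg b], a).
Proof.
  intros Ha Hba.
  set (r := And a b).
  assert (Hb : Der H (Y ++ [Neg b], Neg r)) by apply L2.
  assert (Ha' : Der H ((Y ++ [Neg r]) ++ [b], Neg r)).
  { apply (d_em H _ r).
    - apply cex.
      + apply absurd_ext. intro Z. apply d_expl. apply d_assum.
      + apply absurd_ext. intro Z. apply d_expl. apply d_assum.
      + apply (d_andE2 H _ a). apply d_assum.
    - apply d_assum. }
  assert (Hc : forall X, Der H ((Y ++ [b]) ++ [Neg r], X)).
  { intro X. apply expl_pos. apply d_andI; [exact Hba| apply d_assum]. }
  assert (Hd : forall X, Der H ((Y ++ [Neg r]) ++ [b], X)).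
  { intro X. apply cex; [apply Hc | apply Hc | exact Ha']. }
  assert (He : Der H (Y ++ [Neg r], Neg b)).
  { apply (d_em H _ b); [apply Hd | apply d_assum]. }
  assert (Hf : Der H (Y ++ [Neg r], a)).
  { apply (d_em H _ a); [apply d_assum|].
    apply cex.
    - apply absurd_ext. intro X. apply expl_pos. exact Ha.
    - apply absurd_ext. intro X. apply expl_pos. exact Ha.
    - apply L2a. }
  apply (d_cut H _ (Neg r)); [exact Hb|].
  apply cex.
  - apply d_paste; [exact He | apply d_assum].
  - apply d_paste; [exact He | exact Hf].
  - apply d_paste; [exact Hb | apply d_assum].
Qed.

Lemma second_half (H : list sequent) G a b :
  Der H ((G ++ [a]) ++ [b], a) -> Der H ((G ++ [b]) ++ [a], b) ->
  Der H ((G ++ [Neg b]) ++ [a], Neg b).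
Proof.
  intros H1 H2.
  assert (HX : Der H (G, Imp a (Imp b a))).
  { apply d_impI. apply d_impI. exact H1. }
  assert (HXb : Der H (G ++ [b], Imp a (Imp b a))).
  { apply d_impI. apply d_impI. apply d_paste; [exact H2 | apply d_assum]. }
  pose proof (ORlem H G _ b HX HXb) as HN.
  apply d_impE in HN. apply d_impE in HN.
  apply (d_em H _ b); [|apply d_assum].
  apply cex.
  - apply absurd_ext. intro X. apply d_expl. apply d_assum.
  - apply absurd_ext. intro X. apply d_expl. apply d_assum.
  - exact HN.
Qed.

Lemma nnctx (H : list sequent) Y q X :
  Der H (Y ++ [Neg (Neg q)], X) -> Der H (Y ++ [q], X).
Proof.
  intro HX. apply (d_cut H _ (Neg (Neg q))); [apply dn2; apply d_assum|].
  apply cex.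
  - apply d_paste; [apply dn1 | apply d_assum].
  - apply d_paste; [apply dn1 | exact HX].
  - apply d_paste; [apply dn2; apply d_assum | apply d_assum].
Qed.

Lemma mid_nn (H : list sequent) G q p0 :
  Der H ((G ++ [Neg (Neg q)]) ++ [p0], Neg (Neg q)) -> Der H ((G ++ [q]) ++ [p0], q).
Proof.
  intro Hq. apply d_impI in Hq. apply nnctx in Hq. apply d_impE in Hq.
  apply (d_cut H _ (Neg (Neg q))); [exact Hq| apply dn1].
Qed.

Lemma comp_elim1 (H : list sequent) G a b :
  Der H (G, Comp a b) -> Der H ((G ++ [a]) ++ [b], a).
Proof. intro Hc. apply d_impE. apply d_impE. eapply d_andE1. exact Hc. Qed.

Lemma comp_elim2 (H : list sequent) G a b :
  Der H (G, Comp a b) -> Der H ((G ++ [b]) ++ [a], b).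
Proof. intro Hc. apply d_impE. apply d_impE. eapply d_andE2. exact Hc. Qed.

Lemma comp_intro (H : list sequent) G a b :
  Der H ((G ++ [a]) ++ [b], a) -> Der H ((G ++ [b]) ++ [a], b) -> Der H (G, Comp a b).
Proof.
  intros H1 H2. unfold Comp. apply d_andI; apply d_impI; apply d_impI; assumption.
Qed.

Lemma notimp_p (H : list sequent) Z p q : Der H (Z ++ [Neg (Imp p q)], p).
Proof.
  apply (d_em H _ p); [apply d_assum|].
  apply (Klem H _ (Imp p q)); [apply d_assum|].
  apply d_impI. apply d_expl. apply d_assum.
Qed.

Lemma app2 (G : list form) a b : G ++ [a; b] = (G ++ [a]) ++ [b].
Proof. rewrite <- app_assoc. reflexivity. Qed.

Theorem proposition4p8 : forall (G : list form) (p q : form),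
  derivable_rule1 (G, Comp p q) (G ++ [p; q], p) /\
  derivable_rule1 (G, Comp p q) (G ++ [q; p], q) /\
  derivable_rule1 (G, Comp p q) (G, Comp q p) /\
  derivable_rule1 (G, Comp p q) (G, Comp p (Neg q)) /\
  derivable_rule1 (G, Comp p q) (G, Comp (Neg p) q) /\
  derivable_rule1 (G, Comp p (Neg q)) (G, Comp p q) /\
  derivable_rule1 (G, Comp (Neg p) q) (G, Comp p q) /\
  derivable (G, Comp p (Imp p q)) /\
  derivable (G, Comp p (And p q)) /\
  derivable (G, Comp q (And p q)).
Proof.
  intros G p q. unfold derivable_rule1, derivable.
  assert (P1 : forall c, Der [(G, c)] (G, c)).
  { intro c. apply d_prem. simpl. left. reflexivity. }
  assert (E1 := comp_elim1 _ _ _ _ (P1 (Comp p q))).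
  assert (E2 := comp_elim2 _ _ _ _ (P1 (Comp p q))).
  split; [rewrite app2; exact E1|].
  split; [rewrite app2; exact E2|].
  split; [apply comp_intro; assumption|].
  split.
  { apply comp_intro.
    - apply ORlem; [apply d_assum | exact E1].
    - apply second_half; assumption. }
  split.
  { apply comp_intro.
    - apply second_half; assumption.
    - apply ORlem; [apply d_assum | exact E2]. }
  split.
  { pose proof (comp_elim1 _ _ _ _ (P1 (Comp p (Neg q)))) as H1.
    pose proof (comp_elim2 _ _ _ _ (P1 (Comp p (Neg q)))) as H2.
    apply comp_intro.
    - apply nnctx. apply ORlem; [apply d_assum | exact H1].
    - apply mid_nn. apply second_half; assumption. }
  split.
  { pose proof (comp_elim1 _ _ _ _ (P1 (Comp (Neg p) q))) as H1.
    pose proof (comp_elim2 _ _ _ _ (P1 (Comp (Neg p) q))) as H2.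
    apply comp_intro.
    - apply mid_nn. apply second_half; assumption.
    - apply nnctx. apply ORlem; [apply d_assum | exact H2]. }
  split.
  { apply comp_intro.
    - apply nnctx. apply ORlem; [apply d_assum | apply notimp_p].
    - apply d_impI. apply d_paste; [apply d_assum|].
      apply d_impE. apply d_assum. }
  split.
  { apply comp_intro.
    - eapply d_andE1. apply d_assum.
    - apply d_paste; [eapply d_andE1; apply d_assum | apply d_assum]. }
  { apply comp_intro.
    - eapply d_andE2. apply d_assum.
    - apply d_paste; [eapply d_andE2; apply d_assum | apply d_assum]. }
Qed.
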